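(* Let $\lambda$ be a partition with $n$ parts and let $\beta \in U_\lambda(n)$. If the terminal pair $(\lambda,\beta)$ is nonpermutable, then $\beta \in UGC_\lambda(n) \cap UBP_\lambda(n)$.
   Context: Fix an integer $n \geq 1$ and write $[k] = \{1,\dots,k\}$. A partition is $\lambda = (\lambda_1,\dots,\lambda_n)$ with $\lambda_1 \geq \dots \geq \lambda_n \geq 0$ integers. Let $R_\lambda \subseteq [n-1]$ be the set of $q \in [n-1]$ with $\lambda_q > \lambda_{q+1}$; write its elements $q_1 < \dots < q_r$, and set $q_0 := 0$, $q_{r+1} := n$. For $h \in [r+1]$ the $h$-th carrel is the index interval $\{q_{h-1}+1,\dots,q_h\}$. A $\lambda$-tuple is an $n$-tuple $\beta$ with entries in $[n]$, considered with this carrel structure; it is upper if $\beta_i \geq i$ for all $i$. $U_\lambda(n)$ is the set of upper $\lambda$-tuples. Critical indices: for $\beta \in U_\lambda(n)$ and $h \in [r+1]$, set $x_1 := q_h$; given $x_{u-1}$, if some index $x$ with $q_{h-1} < x < x_{u-1}$ satisfies $\beta_{x_{u-1}} - \beta_x > x_{u-1} - x$, let $x_u$ be the largest such $x$, otherwise stop. The $x_u$ are the critical indices of $\beta$ in carrel $h$; the pairs $(x_u,\beta_{x_u})$ form its critical list. For $i \in [n]$ let $x(i)$ be the smallest critical index in the carrel of $i$ with $x(i) \geq i$. The $\lambda$-platform is $\Xi_\lambda(\beta) := \xi$ with $\xi_i := \beta_{x(i)}$. The critical list is a flag critical list if for every $h \in [r]$, $\beta_{q_h} \leq \beta_k$ where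 $k$ is the smallest critical index of $\beta$ in carrel $h+1$. $UGC_\lambda(n)$ is the set of $\beta \in U_\lambda(n)$ with flag critical list; $UBP_\lambda(n)$ is the set of $\beta \in U_\lambda(n)$ with $\beta_i \leq \Xi_\lambda(\beta)_i$ for all $i$. Lattice paths: lattice points are integer pairs $(a,b)$ with $a \geq 0$, $b \geq 1$. A lattice path is a sequence of lattice points each consecutive step of which is $(a,b) \to (a+1,b)$ or $(a,b) \to (a,b+1)$. An $n$-path is $(\Lambda_1,\dots,\Lambda_n)$ with $\Lambda_m$ a lattice path starting at $(n-m,m)$. The terminals of $(\lambda,\beta)$ are $P_m := (\lambda_m + n - m, \beta_m)$, $m \in [n]$. For a permutation $\pi$ of $[n]$, $\mathcal{LD}_\lambda(\beta;\pi)$ is the set of $n$-paths with $\Lambda_m$ ending at $P_{\pi_m}$ for every $m$ and no two distinct components sharing a lattice point. The pair $(\lambda,\beta)$ is nonpermutable if $\mathcal{LD}_\lambda(\beta;\pi) = \emptyset$ for every permutation $\pi \neq (1,\dots,n)$. *)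

(* Defs.v *)
(* MathComp (boot). Indices are 1-based natural numbers; a tuple
   (x_1,...,x_n) is represented by a function nat -> nat of which only the
   values at 1..n matter. *)
From mathcomp Require Import all_boot.
Set Implicit Arguments. Unset Strict Implicit. Unset Printing Implicit Defensive.

Definition is_partition (n : nat) (lam : nat -> nat) : Prop :=
  forall i, 1 <= i -> i < n -> lam i.+1 <= lam i.

Definition Rlam (n : nat) (lam : nat -> nat) : seq nat :=
  [seq q <- iota 1 (n.-1) | lam q.+1 < lam q].

Definition bounds (n : nat) (lam : nat -> nat) : seq nat :=
  0 :: rcons (Rlam n lam) n.

Definition rlam (n : nat) (lam : nat -> nat) : nat := size (Rlam n lam).
Definition qq (n : nat) (lam : nat -> nat) (h : nat) : nat := nth 0 (bounds n lam) h.

Definition in_U (n : nat) (beta : nat -> nat) : Prop :=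
  forall i, 1 <= i <= n -> [/\ 1 <= beta i, beta i <= n & i <= beta i].

Definition crit_cands (beta : nat -> nat) (lo y : nat) : seq nat :=
  [seq x <- iota lo.+1 (y - lo.+1) | beta x + y < beta y + x].

(* the chain x_1 := y, x_{u} := largest candidate below x_{u-1}, ...
   (fuel: the chain strictly decreases, so y steps suffice) *)
Fixpoint crit_from (beta : nat -> nat) (lo y fuel : nat) : seq nat :=
  match fuel with
  | 0 => [:: y]
  | f.+1 =>
    let c := crit_cands beta lo y in
    if c is [::] then [:: y] else y :: crit_from beta lo (last 0 c) f
  end.

Definition crits (n : nat) (lam beta : nat -> nat) (h : nat) : seq nat :=
  crit_from beta (qq n lam h.-1) (qq n lam h) (qq n lam h).

Definition carrel_of (n : nat) (lam : nat -> nat) (i : nat) : nat :=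
  (find (fun q => i <= q) (rcons (Rlam n lam) n)).+1.

Definition min_le (n : nat) (s : seq nat) : nat := foldr minn n s.

Definition xcrit (n : nat) (lam beta : nat -> nat) (i : nat) : nat :=
  min_le n [seq x <- crits n lam beta (carrel_of n lam i) | i <= x].

Definition platform (n : nat) (lam beta : nat -> nat) (i : nat) : nat :=
  beta (xcrit n lam beta i).

Definition flag_crit (n : nat) (lam beta : nat -> nat) : Prop :=
  forall h, 1 <= h <= rlam n lam ->
    beta (qq n lam h) <= beta (min_le n (crits n lam beta h.+1)).

Definition in_UGC (n : nat) (lam beta : nat -> nat) : Prop :=
  in_U n beta /\ flag_crit n lam beta.

Definition in_UBP (n : nat) (lam beta : nat -> nat) : Prop :=
  in_U n beta /\ forall i, 1 <= i <= n -> beta i <= platform n lam beta i.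

Definition lattice_point (p : nat * nat) : bool := 1 <= p.2.

Definition lstep (p q : nat * nat) : bool :=
  (q == (p.1.+1, p.2)) || (q == (p.1, p.2.+1)).

Definition lattice_path (s : seq (nat * nat)) : bool :=
  [&& s != [::], all lattice_point s & sorted lstep s].

Definition terminal (n : nat) (lam beta : nat -> nat) (m : nat) : nat * nat :=
  (lam m + (n - m), beta m).

Definition is_perm_n (n : nat) (pi : nat -> nat) : Prop :=
  (forall m, 1 <= m <= n -> 1 <= pi m <= n) /\
  (forall m m', 1 <= m <= n -> 1 <= m' <= n -> pi m = pi m' -> m = m').

Definition in_LD (n : nat) (lam beta pi : nat -> nat)
    (Lam : nat -> seq (nat * nat)) : Prop :=
  (forall m, 1 <= m <= n ->
     [/\ lattice_path (Lam m),
         head (0, 0) (Lam m) = (n - m, m) &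
         last (0, 0) (Lam m) = terminal n lam beta (pi m)]) /\
  (forall m m', 1 <= m <= n -> 1 <= m' <= n -> m <> m' ->
     forall p, p \in Lam m -> p \notin Lam m').

Definition nonpermutable (n : nat) (lam beta : nat -> nat) : Prop :=
  forall pi, is_perm_n n pi -> (exists m, 1 <= m <= n /\ pi m <> m) ->
    ~ (exists Lam, in_LD n lam beta pi Lam).

(* Main.v *)
Require Import Defs.
From mathcomp Require Import all_boot zify.
Set Implicit Arguments. Unset Strict Implicit. Unset Printing Implicit Defensive.


Definition stepb (p : nat * nat) (b : bool) : nat * nat :=
  if b then (p.1, p.2.+1) else (p.1.+1, p.2).

Fixpoint walk (p : nat * nat) (ms : seq bool) : seq (nat * nat) :=
  p :: (if ms is b :: ms' then walk (stepb p b) ms' else [::]).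

Lemma walk_sorted p ms : sorted lstep (walk p ms).
Proof.
elim: ms p => [|b ms IH] p //=.
have := IH (stepb p b).
have -> : walk (stepb p b) ms = stepb p b :: behead (walk (stepb p b) ms) by case: ms {IH}.
rewrite /= => ->; rewrite andbT /lstep.
by case: b => /=; rewrite eqxx ?orbT.
Qed.

Lemma walk_last p ms d :
  last d (walk p ms) = (p.1 + count negb ms, p.2 + count id ms).
Proof.
elim: ms p d => [|b ms IH] [x y] d /=; first by rewrite !addn0.
rewrite IH; case: b => /=; congr (_, _); lia.
Qed.

Lemma mem_walk_R a x y ms (u v : nat) :
  (u, v) \in walk (x, y) (nseq a false ++ ms) ->
  (v = y /\ x <= u < x + a) \/ (u, v) \in walk (x + a, y) ms.
Proof.
elim: a x => [|a IH] x /=; first by rewrite addn0; right.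
rewrite in_cons => /orP [/eqP [-> ->] | /IH]; first by left; split => //=; lia.
by rewrite addSnnS; case=> [[H1 H2]|H]; [left; split => //; lia | right].
Qed.

Lemma mem_walk_U a x y ms (u v : nat) :
  (u, v) \in walk (x, y) (nseq a true ++ ms) ->
  (u = x /\ y <= v < y + a) \/ (u, v) \in walk (x, y + a) ms.
Proof.
elim: a y => [|a IH] y /=; first by rewrite addn0; right.
rewrite in_cons => /orP [/eqP [-> ->] | /IH]; first by left; split => //=; lia.
by rewrite addSnnS; case=> [[H1 H2]|H]; [left; split => //; lia | right].
Qed.

Definition path4 x0 y0 e g T B : seq (nat * nat) :=
  walk (x0, y0) (nseq (e - x0) false ++ nseq (g - y0) true ++
                 nseq (T - e) false ++ nseq (B - g) true).

Lemma mem_path4 x0 y0 e g T B x y :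
  x0 <= e <= T -> y0 <= g <= B -> (x, y) \in path4 x0 y0 e g T B ->
  (y = y0 /\ x0 <= x < e) \/ (x = e /\ y0 <= y < g) \/
  (y = g /\ e <= x < T) \/ (x = T /\ g <= y <= B).
Proof.
move=> /andP [h1 h2] /andP [h3 h4].
move=> /mem_walk_R [/= |]; first by lia.
rewrite subnKC // => /mem_walk_U [/= |]; first by lia.
rewrite subnKC // => /mem_walk_R [/= |]; first by lia.
rewrite subnKC // -[nseq _ _]cats0 => /mem_walk_U [/= |]; first by lia.
rewrite subnKC // /= inE => /eqP [-> ->]; lia.
Qed.

Lemma path4_ok x0 y0 e g T B :
  x0 <= e <= T -> y0 <= g <= B -> 1 <= y0 ->
  [/\ lattice_path (path4 x0 y0 e g T B),
      head (0, 0) (path4 x0 y0 e g T B) = (x0, y0) &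
      last (0, 0) (path4 x0 y0 e g T B) = (T, B)].
Proof.
move=> H1 H2 H3; split => //.
- rewrite /lattice_path; apply/and3P; split.
  + by rewrite /path4; case: (_ ++ _).
  + 2: by rewrite /path4; apply: walk_sorted.
  apply/allP => -[x y] /mem_path4.
  move=> /(_ H1 H2); rewrite /lattice_point /=; lia.
- by rewrite /path4; case: (_ ++ _).
- rewrite /path4 walk_last /= !count_cat !count_nseq /=; congr (_, _); lia.
Qed.


Ltac clear_impls := repeat match goal with H : _ -> _ |- _ => clear H | H : _ \/ _ |- _ => clear H end.
Ltac slia := clear_impls; lia.
Ltac prune := repeat match goal with
  | H : ?P -> ?Q |- _ =>
     first [ let h := fresh in (have h : P by slia); specialize (H h); clear h
           | clear H ]
  end.

Lemma mono n lam a b : is_partition n lam -> 1 <= a -> a <= b -> b <= n -> lam b <= lam a.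
Proof.
move=> Hp Ha; elim: b => [|b IH] Hab Hbn; first by lia.
case: (ltngtP a b.+1) Hab => // [Hlt|Heq] _; last by rewrite Heq.
have := Hp b (leq_trans Ha (ltnSE Hlt)) Hbn; have := IH (ltnSE Hlt) (ltnW Hbn); lia.
Qed.

Definition cc n (lam : nat -> nat) m := lam m + (n - m).
Definition shpi i k m := if (i <= m) && (m < k) then m.+1 else if m == k then i else m.
Definition sel (n : nat) (lam : nat -> nat) i k m (A B C D E : nat) :=
  if m < i then A else if m < k then B else if m == k then C
  else if lam m == lam k then D else E.
Definition pe n lam (beta : nat -> nat) i k m :=
  sel n lam i k m (cc n lam m) (cc n lam m.+1) (cc n lam k - 1) (cc n lam m - 1) (cc n lam m).
Definition pg n lam (beta : nat -> nat) i k m :=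
  sel n lam i k m m m (beta k).+1 (beta k + 1 + m - k) m.
Definition pT n lam (beta : nat -> nat) i k m :=
  sel n lam i k m (cc n lam m) (cc n lam m.+1) (cc n lam i) (cc n lam m) (cc n lam m).
Definition pB n lam (beta : nat -> nat) i k m :=
  sel n lam i k m (beta m) (beta m.+1) (beta i) (beta m) (beta m).
Definition pp n lam beta i k m :=
  path4 (n - m) m (pe n lam beta i k m) (pg n lam beta i k m)
        (pT n lam beta i k m) (pB n lam beta i k m).

Lemma pvalid n lam beta i k m :
  is_partition n lam -> in_U n beta -> 1 <= i -> i < k -> k <= n -> beta k < beta i ->
  (forall j, i < j < k -> beta j <= beta k) -> 1 <= lam k ->
  (forall j, k < j <= n -> lam j = lam k -> beta k + 1 + j - k <= beta j) ->
  1 <= m <= n ->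
  n - m <= pe n lam beta i k m <= pT n lam beta i k m /\ m <= pg n lam beta i k m <= pB n lam beta i k m.
Proof.
move=> Hp HU Hi Hik Hkn Hb Hmid Hl Hs /andP [Hm Hmn].
have U j : 1 <= j <= n -> j <= beta j by move=> /HU [].
rewrite /pe /pg /pT /pB /sel /cc.
case: ifP => C1.
  by have := U m; lia.
case: ifP => C2.
  have := U m.+1; have : lam k <= lam m.+1 by apply: (mono Hp); slia.
  lia.
case: ifP => C3.
  move/eqP: C3 => ->; have := U k; have : lam k <= lam i by apply: (mono Hp); slia.
  lia.
case: ifP => C4.
  have := U k; have := Hs m; move/eqP: C4; lia.
by have := U m; lia.
Qed.

Lemma disj n lam beta i k m m' x y :
  is_partition n lam -> in_U n beta -> 1 <= i -> i < k -> k <= n -> beta k < beta i ->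
  (forall j, i < j < k -> beta j <= beta k) -> 1 <= lam k ->
  (forall j, k < j <= n -> lam j = lam k -> beta k + 1 + j - k <= beta j) ->
  1 <= m -> m < m' -> m' <= n ->
  (x, y) \in pp n lam beta i k m -> (x, y) \in pp n lam beta i k m' -> False.
Proof.
move=> Hp HU Hi Hik Hkn Hb Hmid Hl Hs Hm Hmm' Hm'n.
have U j : 1 <= j <= n -> j <= beta j by move=> /HU [].
have Um := U m; have Um' := U m'; have Um1 := U m.+1; have Um'1 := U m'.+1.
have Uk := U k; have Ui := U i.
have M1 := mono Hp Hm (ltnW Hmm') Hm'n.
have M2 : lam m' <= lam m.+1 by apply: (mono Hp); slia.
have M3 : m' < k -> lam m'.+1 <= lam m.+1 by move=> ?; apply: (mono Hp); slia.
have M4 : m' < k -> lam k <= lam m'.+1 by move=> ?; apply: (mono Hp); slia.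
have M5 : m < k -> lam k <= lam m.+1 by move=> ?; apply: (mono Hp); slia.
have M6 : m < i -> lam i <= lam m by move=> ?; apply: (mono Hp); slia.
have M7 : lam k <= lam i by apply: (mono Hp); slia.
have M8 : k < m' -> lam m' <= lam k by move=> ?; apply: (mono Hp); slia.
have M9 : m < k -> lam k <= lam m by move=> ?; apply: (mono Hp); slia.
have M10 : lam m.+1 <= lam m by apply: (mono Hp); slia.
have B1 : i < m.+1 <= k -> beta m.+1 <= beta k.
  move=> /andP [h1 h2]; case: (ltngtP m.+1 k) => h3; [apply: Hmid; slia | slia | by rewrite h3].
have B2 : i < m'.+1 <= k -> beta m'.+1 <= beta k.
  move=> /andP [h1 h2]; case: (ltngtP m'.+1 k) => h3; [apply: Hmid; slia | slia | by rewrite h3].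
have S1 : k < m -> lam m = lam k -> beta k + 1 + m - k <= beta m by move=> ? ?; apply: Hs => //; slia.
have S2 : k < m' -> lam m' = lam k -> beta k + 1 + m' - k <= beta m' by move=> ? ?; apply: Hs => //; slia.
have V := pvalid Hp HU Hi Hik Hkn Hb Hmid Hl Hs.
move=> /mem_path4 H /mem_path4 H'.
have {H} := H (proj1 (V m ltac:(slia))) (proj2 (V m ltac:(slia))).
have {H'} := H' (proj1 (V m' ltac:(slia))) (proj2 (V m' ltac:(slia))).
rewrite /pe /pg /pT /pB /sel /cc.
case: ifP => C1; [|case: ifP => C2; [|case: ifP => C3; [|case: ifP => C4]]];
case: ifP => C1'; try (case: ifP => C2'; try (case: ifP => C3'; try (case: ifP => C4')));
move=> H H'; clear Hmid Hs U V; prune; lia.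
Qed.


Lemma construct n lam beta i k :
  is_partition n lam -> in_U n beta -> 1 <= i -> i < k -> k <= n -> beta k < beta i ->
  (forall j, i < j < k -> beta j <= beta k) -> 1 <= lam k ->
  (forall j, k < j <= n -> lam j = lam k -> beta k + 1 + j - k <= beta j) ->
  nonpermutable n lam beta -> False.
Proof.
move=> Hp HU Hi Hik Hkn Hb Hmid Hl Hs Hnp.
apply: (Hnp (shpi i k)).
- split.
  + move=> m Hm; rewrite /shpi; repeat case: ifP => ?; slia.
  + move=> m m' Hm Hm'; rewrite /shpi; repeat case: ifP => ?; slia.
- exists k; split; first by slia.
  by rewrite /shpi ltnn andbF eqxx; slia.
- exists (pp n lam beta i k); split.
  + move=> m Hm.
    have [V1 V2] := pvalid Hp HU Hi Hik Hkn Hb Hmid Hl Hs Hm.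
    have [A B C] := path4_ok V1 V2 (proj1 (andP Hm)).
    split => //; rewrite /pp C /terminal /pT /pB /sel /shpi /cc.
    by repeat case: ifP => ?; try (exfalso; slia).
  + move=> m m' Hm Hm' Hne [x y] H1; apply/negP => H2.
    case: (ltngtP m m') => Hc.
    * apply: (disj Hp HU Hi Hik Hkn Hb Hmid Hl Hs _ Hc _ H1 H2); slia.
    * apply: (disj Hp HU Hi Hik Hkn Hb Hmid Hl Hs _ Hc _ H2 H1); slia.
    * by apply: Hne.
Qed.


Lemma filter_iota_last (P : pred nat) a l j :
  a <= j < a + l -> P j -> j <= last 0 [seq x <- iota a l | P x].
Proof.
elim: l j => [|l IH] j Hj Pj; first by slia.
rewrite -addn1 iotaD filter_cat last_cat /=.
case: ifP => HP /=; first by slia.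
apply: IH => //; case: (eqVneq j (a + l)) => [E|E]; first by rewrite E HP in Pj.
slia.
Qed.

Lemma cand_last beta lo y :
  crit_cands beta lo y != [::] ->
  let z := last 0 (crit_cands beta lo y) in
  [/\ lo < z < y, beta z + y < beta y + z &
      forall j, z < j < y -> beta y + j <= beta j + y].
Proof.
move=> Hne z.
have Hz : z \in crit_cands beta lo y.
  rewrite /z; case: (crit_cands beta lo y) Hne => [|a s] //= _.
  exact: mem_last.
move: Hz; rewrite /crit_cands mem_filter mem_iota => /andP [H1 H2].
split; [slia | exact: H1 |].
move=> j Hj; rewrite leqNgt; apply/negP => Pj.
have := @filter_iota_last (fun x => beta x + y < beta y + x) lo.+1 (y - lo.+1) j.
rewrite -/(crit_cands beta lo y) -/z => /(_ _ Pj); slia.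
Qed.

Lemma crit_good beta lo fuel : forall y top,
  (forall j, y < j <= top -> beta y + j < beta j + y) ->
  forall x, x \in crit_from beta lo y fuel ->
  [/\ x <= y, (x = y \/ lo < x) & forall j, x < j <= top -> beta x + j < beta j + x].
Proof.
elim: fuel => [|f IH] y top Hy x /=.
  by rewrite inE => /eqP ->; split => //; left.
case E: (crit_cands beta lo y) => [|a s].
  by rewrite inE => /eqP ->; split => //; left.
have Hne : crit_cands beta lo y != [::] by rewrite E.
have [H1 H2 H3] := cand_last Hne; rewrite E in H1 H2 H3.
set z := last 0 (a :: s) in H1 H2 H3 *.
rewrite inE => /orP [/eqP -> | Hx]; first by split => //; left.
have Hz : forall j, z < j <= top -> beta z + j < beta j + z.
  move=> j Hj; case: (ltngtP j y) => Hjy.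
  - have := H3 j ltac:(slia); slia.
  - have := Hy j ltac:(slia); slia.
  - by rewrite Hjy.
have [K1 K2 K3] := IH z top Hz x Hx.
split => //; [lia | right; lia].
Qed.

Lemma min_le_mem n s : min_le n s = n \/ min_le n s \in s.
Proof.
elim: s => [|a s IH] /=; first by left.
rewrite /minn; case: ifP => _; first by right; rewrite inE eqxx.
by case: IH => [->|H]; [left | right; rewrite inE H orbT].
Qed.

Lemma refine_i beta k : forall l i0, k - i0 <= l -> i0 < k -> beta k < beta i0 ->
  exists i, [/\ i0 <= i < k, beta k < beta i & forall j, i < j < k -> beta j <= beta k].
Proof.
elim => [|l IH] i0 Hl Hik Hb; first by slia.
case: (boolP (has (fun j => beta k < beta j) (iota i0.+1 (k - i0.+1)))).
  move=> /hasP [j]; rewrite mem_iota => Hj Hbj.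
  have [i [A B C]] := IH j ltac:(slia) ltac:(slia) Hbj.
  by exists i; split => //; slia.
move=> /hasPn H; exists i0; split => //; first by slia.
move=> j Hj; have := H j; rewrite mem_iota => /(_ ltac:(slia)); slia.
Qed.

Lemma finish n lam beta i0 k top :
  is_partition n lam -> in_U n beta -> nonpermutable n lam beta ->
  1 <= i0 -> i0 < k -> top \in rcons (Rlam n lam) n -> k <= top ->
  (forall j, k < j <= top -> beta k + j < beta j + k) -> beta k < beta i0 -> i0 <= n -> False.
Proof.
move=> Hp HU Hnp Hi0 Hik Htop Hkt Hg Hb Hi0n.
have U j : 1 <= j <= n -> [/\ 1 <= beta j, beta j <= n & j <= beta j] by move=> /HU.
rewrite mem_rcons inE in Htop; case/orP: Htop => [/eqP Et | HR].
  subst top; case: (ltngtP k n) => Hkn.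
  - have := Hg n ltac:(slia); have [? ? ?] := U n ltac:(slia); have [? ? ?] := U k ltac:(slia); slia.
  - slia.
  - have [? ? ?] := U n ltac:(slia); have [? ? ?] := U i0 ltac:(slia); rewrite Hkn in Hb; slia.
move: HR; rewrite mem_filter mem_iota => /andP [Hdrop Hrange].
have Hl : lam top <= lam k by apply: (mono Hp); slia.
have [i [A B C]] := refine_i (leqnn (k - i0)) Hik Hb.
apply: (@construct n lam beta i k Hp HU) => //; try slia.
move=> j Hj Hlj; case: (leqP j top) => Hjt.
  have := Hg j ltac:(slia); slia.
have : lam j <= lam top.+1 by apply: (mono Hp); slia.
slia.
Qed.


Theorem proposition6p3 (n : nat) (lam beta : nat -> nat) :
  1 <= n ->
  is_partition n lam ->
  in_U n beta ->
  nonpermutable n lam beta ->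
  in_UGC n lam beta /\ in_UBP n lam beta.
Proof.
move=> Hn Hp HU Hnp.
have U j : 1 <= j <= n -> [/\ 1 <= beta j, beta j <= n & j <= beta j] by move=> /HU.
split; split => //.
- move=> h /andP [Hh1 Hhr].
  rewrite leqNgt; apply/negP => Hlt.
  set k := min_le n (crits n lam beta h.+1) in Hlt.
  have Eq : qq n lam h = nth 0 (Rlam n lam) h.-1.
    rewrite /qq /bounds; case: h Hh1 Hhr {k Hlt} => [|h] //= _ Hhr.
    by rewrite nth_rcons -/(rlam n lam) Hhr.
  have HqR : qq n lam h \in Rlam n lam.
    by rewrite Eq; apply: mem_nth; rewrite -/(rlam n lam); slia.
  have := HqR; rewrite mem_filter mem_iota => /andP [_ Hq].
  case: (min_le_mem n (crits n lam beta h.+1)) => Hk; rewrite -/k in Hk.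
  + have [? ? ?] := U n ltac:(slia); have [? ? ?] := U (qq n lam h) ltac:(slia).
    rewrite Hk in Hlt; slia.
  + have Htop : qq n lam h.+1 \in rcons (Rlam n lam) n.
      rewrite /qq /bounds /=; apply: mem_nth; rewrite size_rcons -/(rlam n lam); slia.
    have Hvac : forall j, qq n lam h.+1 < j <= qq n lam h.+1 ->
        beta (qq n lam h.+1) + j < beta j + qq n lam h.+1 by move=> j Hj; exfalso; slia.
    have [K1 K2 K3] := crit_good Hvac Hk.
    have Hlt2 : qq n lam h < qq n lam h.+1.
      rewrite Eq /qq /bounds /= nth_rcons; case: ifP => Hh.
        apply: (sorted_ltn_nth ltn_trans) => //.
        * exact: (sorted_filter ltn_trans _ (iota_ltn_sorted _ _)).
        * by rewrite inE; slia.
        * slia.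
      have -> : h == size (Rlam n lam).
        by rewrite -/(rlam n lam) in Hh *; apply/eqP; slia.
      rewrite -Eq; slia.
    apply: (finish Hp HU Hnp (i0 := qq n lam h) (k := k) (top := qq n lam h.+1)) => //;
      try slia.
    by move: K2; rewrite /=; case => [->|]; lia.
- move=> i0 /andP [Hi1 Hin]; rewrite leqNgt; apply/negP => Hlt.
  rewrite /platform in Hlt; set k := xcrit n lam beta i0 in Hlt.
  case: (min_le_mem n [seq x <- crits n lam beta (carrel_of n lam i0) | i0 <= x]) => Hk;
    rewrite -/(xcrit n lam beta i0) -/k in Hk.
  + have [? ? ?] := U n ltac:(slia); have [? ? ?] := U i0 ltac:(slia).
    rewrite Hk in Hlt; slia.
  + move: Hk; rewrite mem_filter => /andP [Hik Hk].
    set h := carrel_of n lam i0 in Hk.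
    have Htop : qq n lam h \in rcons (Rlam n lam) n.
      rewrite /qq /bounds /h /carrel_of /=; apply: mem_nth; rewrite -has_find.
      by apply/hasP; exists n; [rewrite mem_rcons inE eqxx | ].
    have Hvac : forall j, qq n lam h < j <= qq n lam h ->
        beta (qq n lam h) + j < beta j + qq n lam h by move=> j Hj; exfalso; slia.
    have [K1 K2 K3] := crit_good Hvac Hk.
    have Hne : i0 != k by apply/negP => /eqP E; rewrite -E in Hlt; slia.
    apply: (finish Hp HU Hnp (i0 := i0) (k := k) (top := qq n lam h)) => //; slia.
Qed.
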